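(* In the setting of the context, let $\mu_1,\mu_2$ be nowhere-equal solutions of $$\widehat e_1\cdot\nabla\mu=-C_{31}^{2}-\mu\big(C_{31}^{3}+C_{12}^{2}\big)-\mu^{2}C_{12}^{3}$$ and let $\alpha_1,\alpha_2$ be nowhere-vanishing functions satisfying $\widehat e_1\cdot\nabla\ln|\alpha_i/\Vert v\Vert|=C_{31}^{3}+\mu_iC_{12}^{3}$ for $i=1,2$ (so that $J_i=\alpha_i(\widehat e_2+\mu_i\widehat e_3)$ form a compatible pair of Poisson vector fields for which $\dot x=v(x)$ is locally bi-Hamiltonian). Then $$\nabla\cdot\widehat e_1=\widehat e_1\cdot\nabla\ln\left|\frac{\alpha_1\alpha_2(\mu_2-\mu_1)}{\Vert v\Vert^2}\right|.$$
   Context: Setting: $M$ is an oriented three-dimensional manifold with a Riemannian metric $g$; $\nabla$, $\nabla\cdot$, $\nabla\times$ and $\times$ denote gradient, divergence, curl and cross product. A Poisson vector field is a vector field $J$ with $J\cdot(\nabla\times J)=0$. $v$ is a nowhere vanishing vector field, $\widehat e_1=v/\Vert v\Vert$, extended to a local oriented orthonormal frame $(\widehat e_1,\widehat e_2,\widehat e_3)$ with $\widehat e_3=\widehat e_1\times\widehat e_2$, and structure functions $C_{ij}^k$ defined by $[\widehat e_i,\widehat e_j]=C_{ij}^k\widehat e_k$. *)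

(* Defs.v *)
From Stdlib Require Import Reals Lra ClassicalEpsilon.
Open Scope R_scope.

(* Points of a coordinate chart U ⊂ R^3: coordinates 0,1,2. *)
Definition pt := nat -> R.

Definition sum3 (F : nat -> R) : R := F 0%nat + F 1%nat + F 2%nat.

Definition shift (x : pt) (i : nat) (t : R) : pt :=
  fun j => if Nat.eqb j i then x j + t else x j.

Definition has_partial (f : pt -> R) (i : nat) (x : pt) (l : R) : Prop :=
  derivable_pt_lim (fun t => f (shift x i t)) 0 l.

(* the i-th partial derivative (meaningful where it exists) *)
Definition pd (f : pt -> R) (i : nat) (x : pt) : R :=
  epsilon (inhabits 0) (fun l => has_partial f i x l).

Definition open3 (U : pt -> Prop) : Prop :=
  forall x, U x -> exists r, 0 < r /\
    forall y, (forall j, (j < 3)%nat -> Rabs (y j - x j) < r) -> U y.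

Definition cont_on (U : pt -> Prop) (f : pt -> R) : Prop :=
  forall x, U x -> forall eps, 0 < eps -> exists delta, 0 < delta /\
    forall y, U y -> (forall j, (j < 3)%nat -> Rabs (y j - x j) < delta) ->
      Rabs (f y - f x) < eps.

Definition C1_on (U : pt -> Prop) (f : pt -> R) : Prop :=
  exists Df : nat -> pt -> R,
    (forall i x, (i < 3)%nat -> U x -> has_partial f i x (Df i x)) /\
    (forall i, (i < 3)%nat -> cont_on U (Df i)).

Definition VF := nat -> pt -> R.
Definition atp (X : VF) (x : pt) : nat -> R := fun k => X k x.

Definition dd (X : VF) (f : pt -> R) (x : pt) : R :=
  sum3 (fun i => X i x * pd f i x).

Definition metric := nat -> nat -> pt -> R.
Definition gin (g : metric) (x : pt) (u w : nat -> R) : R :=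
  sum3 (fun i => sum3 (fun j => g i j x * u i * w j)).

Definition det3 (M : nat -> nat -> R) : R :=
  M 0%nat 0%nat * (M 1%nat 1%nat * M 2%nat 2%nat - M 1%nat 2%nat * M 2%nat 1%nat)
  - M 0%nat 1%nat * (M 1%nat 0%nat * M 2%nat 2%nat - M 1%nat 2%nat * M 2%nat 0%nat)
  + M 0%nat 2%nat * (M 1%nat 0%nat * M 2%nat 1%nat - M 1%nat 1%nat * M 2%nat 0%nat).

Definition detg (g : metric) (x : pt) : R := det3 (fun i j => g i j x).

Definition divg (g : metric) (X : VF) (x : pt) : R :=
  / sqrt (detg g x) * sum3 (fun i => pd (fun y => sqrt (detg g y) * X i y) i x).

Definition bracket (X Y : VF) : VF :=
  fun k x => sum3 (fun i => X i x * pd (Y k) i x - Y i x * pd (X k) i x).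

Definition vnorm (g : metric) (X : VF) (x : pt) : R := sqrt (gin g x (atp X x) (atp X x)).

Definition is_metric_on (U : pt -> Prop) (g : metric) : Prop :=
  (forall i j, (i < 3)%nat -> (j < 3)%nat -> C1_on U (g i j)) /\
  (forall i j x, U x -> g i j x = g j i x) /\
  (forall x u, U x -> (exists i, (i < 3)%nat /\ u i <> 0) -> 0 < gin g x u u).

(* Main.v *)
Require Import Defs.
From Stdlib Require Import Reals Lra Lia ClassicalEpsilon FunctionalExtensionality.
Open Scope R_scope.

Lemma shift0 x i : shift x i 0 = x.
Proof. apply functional_extensionality; intro j; unfold shift; destruct (Nat.eqb j i); ring. Qed.

Lemma hp_ext_val f i x l l' : has_partial f i x l -> l = l' -> has_partial f i x l'.
Proof. intros H ->; exact H. Qed.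

Lemma pd_eq f i x l : has_partial f i x l -> pd f i x = l.
Proof.
  intro H. unfold pd.
  assert (E : exists l, has_partial f i x l) by eauto.
  pose proof (epsilon_spec (inhabits 0) _ E) as S.
  exact (uniqueness_limite _ _ _ _ S H).
Qed.

Lemma hp_pd U f i x : C1_on U f -> U x -> (i < 3)%nat -> has_partial f i x (pd f i x).
Proof.
  intros [Df [H1 _]] Hx Hi.
  rewrite (pd_eq f i x (Df i x)); auto.
Qed.

Lemma hp_plus f g i x l1 l2 : has_partial f i x l1 -> has_partial g i x l2 ->
  has_partial (fun y => f y + g y) i x (l1 + l2).
Proof. intros A B; exact (derivable_pt_lim_plus _ _ _ _ _ A B). Qed.

Lemma hp_minus f g i x l1 l2 : has_partial f i x l1 -> has_partial g i x l2 ->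
  has_partial (fun y => f y - g y) i x (l1 - l2).
Proof. intros A B; exact (derivable_pt_lim_minus _ _ _ _ _ A B). Qed.

Lemma hp_mult f g i x l1 l2 : has_partial f i x l1 -> has_partial g i x l2 ->
  has_partial (fun y => f y * g y) i x (l1 * g x + f x * l2).
Proof. intros A B. pose proof (derivable_pt_lim_mult _ _ _ _ _ A B) as C.
  unfold has_partial. cbv beta in C. rewrite shift0 in C. exact C. Qed.

Lemma hp_const c i x : has_partial (fun _ => c) i x 0.
Proof. exact (derivable_pt_lim_const c 0). Qed.

Lemma hp_div f g i x l1 l2 : has_partial f i x l1 -> has_partial g i x l2 -> g x <> 0 ->
  has_partial (fun y => f y / g y) i x ((l1 * g x - l2 * f x) / (g x)²).
Proof. intros A B Z. unfold has_partial in *.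
  assert (Z' : (fun t => g (shift x i t)) 0 <> 0) by (cbv beta; rewrite shift0; exact Z).
  pose proof (derivable_pt_lim_div _ _ _ _ _ A B Z') as C. cbv beta in C. rewrite shift0 in C. exact C. Qed.

Lemma hp_sq f i x l : has_partial f i x l -> has_partial (fun y => f y ^ 2) i x (2 * f x * l).
Proof. intro A. eapply hp_ext_val.
  - assert (E: (fun y => f y ^ 2) = (fun y => f y * f y)) by (apply functional_extensionality; intro; ring).
    rewrite E. apply hp_mult; exact A.
  - ring. Qed.

Lemma hp_sqrt f i x l : has_partial f i x l -> 0 < f x ->
  has_partial (fun y => sqrt (f y)) i x (/ (2 * sqrt (f x)) * l).
Proof. intros A P. unfold has_partial in *.
  apply (derivable_pt_lim_comp (fun t => f (shift x i t)) sqrt 0 l). exact A.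
  cbv beta. rewrite shift0. apply derivable_pt_lim_sqrt; exact P. Qed.

Lemma ln_abs_sq y : ln (Rabs y) = / 2 * ln (y * y).
Proof.
  destruct (Req_dec y 0) as [->|N].
  - assert (L0 : ln 0 = 0) by (unfold ln; destruct (Rlt_dec 0 0) as [h|h]; [exfalso; exact (Rlt_irrefl 0 h) | reflexivity]).
    rewrite Rabs_R0, Rmult_0_l, L0. ring.
  - assert (P : 0 < Rabs y) by (apply Rabs_pos_lt; exact N).
    replace (y * y) with (Rabs y * Rabs y).
    + rewrite ln_mult by exact P. field.
    + rewrite <- Rabs_mult. apply Rabs_pos_eq. nra.
Qed.

Lemma hp_lnabs f i x l : has_partial f i x l -> f x <> 0 ->
  has_partial (fun y => ln (Rabs (f y))) i x (l / f x).
Proof. intros A N.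
  assert (E: (fun y => ln (Rabs (f y))) = (fun y => / 2 * ln (f y * f y)))
    by (apply functional_extensionality; intro; apply ln_abs_sq).
  rewrite E. clear E.
  pose proof (hp_mult _ _ _ _ _ _ A A) as B.
  assert (C : has_partial (fun y => ln (f y * f y)) i x (/ (f x * f x) * (l * f x + f x * l))).
  { unfold has_partial in *.
    apply (derivable_pt_lim_comp (fun t => f (shift x i t) * f (shift x i t)) ln 0). exact B.
    cbv beta. rewrite shift0. apply derivable_pt_lim_ln. assert (0 < f x * f x) by (apply Rsqr_pos_lt; exact N). lra. }
  eapply hp_ext_val. apply (derivable_pt_lim_scal _ (/2) 0 _ C). field. exact N.
Qed.

Lemma hp_loc U f h i x l : open3 U -> U x -> (forall y, U y -> f y = h y) ->
  has_partial h i x l -> has_partial f i x l.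
Proof.
  intros HU Hx Feq Hh. destruct (HU x Hx) as [r [Hr Hball]].
  assert (Hin : forall t, Rabs t < r -> U (shift x i t)).
  { intros t Ht. apply Hball. intros j _. unfold shift. destruct (Nat.eqb j i).
    - replace (x j + t - x j) with t by ring. exact Ht.
    - rewrite Rminus_diag, Rabs_R0. exact Hr. }
  unfold has_partial, derivable_pt_lim in *. intros eps Heps.
  destruct (Hh eps Heps) as [d Hd].
  assert (Hm : 0 < Rmin d r) by (apply Rmin_pos; [apply cond_pos| exact Hr]).
  exists (mkposreal _ Hm). intros t Ht0 Ht. simpl in Ht.
  rewrite (Feq (shift x i (0 + t))), (Feq (shift x i 0)).
  - apply Hd; auto. pose proof (Rmin_l d r); lra.
  - apply Hin. rewrite Rabs_R0; exact Hr.
  - apply Hin. rewrite Rplus_0_l. pose proof (Rmin_r d r); lra.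
Qed.

Definition colrep (M : nat -> nat -> R) (a : nat) (c : nat -> R) : nat -> nat -> R :=
  fun k b => if Nat.eqb b a then c k else M k b.

Ltac hp_auto leaf :=
  repeat (first [ eapply hp_minus | eapply hp_plus | eapply hp_mult | leaf ]).

Lemma hp_det3 (M : nat -> nat -> pt -> R) (dM : nat -> nat -> R) i x :
  (forall k a, (k < 3)%nat -> (a < 3)%nat -> has_partial (M k a) i x (dM k a)) ->
  has_partial (fun y => det3 (fun k a => M k a y)) i x
    (sum3 (fun a => det3 (colrep (fun k b => M k b x) a (fun k => dM k a)))).
Proof.
  intro H. unfold det3. eapply hp_ext_val.
  - hp_auto ltac:(apply H; lia).
  - unfold sum3, colrep; simpl. ring.
Qed.

Lemma det_gram (G E : nat -> nat -> R) :
  det3 (fun a b => sum3 (fun i => sum3 (fun j => G i j * E i a * E j b))) =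
  det3 G * det3 E * det3 E.
Proof. unfold det3, sum3. ring. Qed.

Lemma det3_ext M N : (forall k b, (k < 3)%nat -> (b < 3)%nat -> M k b = N k b) -> det3 M = det3 N.
Proof. intro H. unfold det3. rewrite !H by lia. reflexivity. Qed.

Lemma colrep_ext M a c c' : (forall k, (k < 3)%nat -> c k = c' k) ->
  det3 (colrep M a c) = det3 (colrep M a c').
Proof. intro H. apply det3_ext. intros k b Hk Hb. unfold colrep. destruct (Nat.eqb b a); auto. Qed.

Lemma sumlem D f g h : D <> 0 -> D * sum3 (fun i => (f i * D - g i * h i) / D²) =
  (D * sum3 f - sum3 (fun i => g i * h i)) / D.
Proof. intro. unfold sum3, Rsqr. field. auto. Qed.

Lemma alg (E : nat -> nat -> R) (P : nat -> nat -> nat -> R) (C : nat -> nat -> nat -> R) :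
  det3 (fun k a => E (S a) k) <> 0 ->
  (forall a k, (1 <= a <= 3)%nat -> (k < 3)%nat ->
     sum3 (fun i => E 1%nat i * P a k i - E a i * P 1%nat k i) =
     C 1%nat a 1%nat * E 1%nat k + C 1%nat a 2%nat * E 2%nat k + C 1%nat a 3%nat * E 3%nat k) ->
  (forall k, (k < 3)%nat ->
     sum3 (fun i => E 3%nat i * P 1%nat k i - E 1%nat i * P 3%nat k i) =
     C 3%nat 1%nat 1%nat * E 1%nat k + C 3%nat 1%nat 2%nat * E 2%nat k + C 3%nat 1%nat 3%nat * E 3%nat k) ->
  det3 (fun k a => E (S a) k) *
  sum3 (fun i => (P 1%nat i i * det3 (fun k a => E (S a) k) -
     sum3 (fun a => det3 (colrep (fun k b => E (S b) k) a (fun k => P (S a) k i))) * E 1%nat i)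
     / (det3 (fun k a => E (S a) k))²) = C 3%nat 1%nat 3%nat - C 1%nat 2%nat 2%nat.
Proof.
  intros HD H1 H3.
  set (Em := fun k b => E (S b) k) in *.
  set (D := det3 Em) in *.
  assert (K : forall a k, (1 <= a <= 3)%nat -> (k < 3)%nat ->
     sum3 (fun i => E 1%nat i * P a k i) = sum3 (fun i => E a i * P 1%nat k i) +
     (C 1%nat a 1%nat * E 1%nat k + C 1%nat a 2%nat * E 2%nat k + C 1%nat a 3%nat * E 3%nat k)).
  { intros a k Ha Hk. generalize (H1 a k Ha Hk). unfold sum3. intro. lra. }
  assert (S1 : sum3 (fun i => sum3 (fun a => det3 (colrep Em a (fun k => P (S a) k i))) * E 1%nat i)
     = sum3 (fun a => det3 (colrep Em a (fun k => sum3 (fun i => E 1%nat i * P (S a) k i))))).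
  { unfold sum3, det3, colrep, Em; simpl. ring. }
  assert (S2 : sum3 (fun a => det3 (colrep Em a (fun k => sum3 (fun i => E 1%nat i * P (S a) k i))))
     = sum3 (fun a => det3 (colrep Em a (fun k => sum3 (fun i => E (S a) i * P 1%nat k i) +
     (C 1%nat (S a) 1%nat * E 1%nat k + C 1%nat (S a) 2%nat * E 2%nat k + C 1%nat (S a) 3%nat * E 3%nat k))))).
  { unfold sum3 at 1 3. rewrite (colrep_ext _ 0%nat _ _ (fun k Hk => K 1%nat k ltac:(lia) Hk)).
    rewrite (colrep_ext _ 1%nat _ _ (fun k Hk => K 2%nat k ltac:(lia) Hk)).
    rewrite (colrep_ext _ 2%nat _ _ (fun k Hk => K 3%nat k ltac:(lia) Hk)). reflexivity. }
  assert (S3 : sum3 (fun a => det3 (colrep Em a (fun k => sum3 (fun i => E (S a) i * P 1%nat k i) +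
     (C 1%nat (S a) 1%nat * E 1%nat k + C 1%nat (S a) 2%nat * E 2%nat k + C 1%nat (S a) 3%nat * E 3%nat k))))
     = D * (sum3 (fun i => P 1%nat i i) + C 1%nat 1%nat 1%nat + C 1%nat 2%nat 2%nat + C 1%nat 3%nat 3%nat)).
  { unfold D, sum3, det3, colrep, Em; simpl. ring. }
  assert (C111 : C 1%nat 1%nat 1%nat = 0).
  { assert (X : forall k, (k < 3)%nat ->
      C 1%nat 1%nat 1%nat * E 1%nat k + C 1%nat 1%nat 2%nat * E 2%nat k + C 1%nat 1%nat 3%nat * E 3%nat k = 0).
    { intros k Hk. generalize (K 1%nat k ltac:(lia) Hk). intro. lra. }
    assert (Y : D * C 1%nat 1%nat 1%nat = det3 (colrep Em 0%nat (fun k =>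
      C 1%nat 1%nat 1%nat * E 1%nat k + C 1%nat 1%nat 2%nat * E 2%nat k + C 1%nat 1%nat 3%nat * E 3%nat k))).
    { unfold D, det3, colrep, Em; simpl. ring. }
    rewrite (colrep_ext _ _ _ (fun _ => 0) X) in Y.
    assert (Z : det3 (colrep Em 0%nat (fun _ => 0)) = 0) by (unfold det3, colrep; simpl; ring).
    rewrite Z in Y. apply (Rmult_eq_reg_l D); [lra|exact HD]. }
  assert (C133 : C 1%nat 3%nat 3%nat = - C 3%nat 1%nat 3%nat).
  { assert (X : forall k, (k < 3)%nat ->
      (C 1%nat 3%nat 1%nat + C 3%nat 1%nat 1%nat) * E 1%nat k + (C 1%nat 3%nat 2%nat + C 3%nat 1%nat 2%nat) * E 2%nat k
      + (C 1%nat 3%nat 3%nat + C 3%nat 1%nat 3%nat) * E 3%nat k = 0).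
    { intros k Hk. generalize (H1 3%nat k ltac:(lia) Hk) (H3 k Hk). unfold sum3. intros A B. nra. }
    assert (Y : D * (C 1%nat 3%nat 3%nat + C 3%nat 1%nat 3%nat) = det3 (colrep Em 2%nat (fun k =>
      (C 1%nat 3%nat 1%nat + C 3%nat 1%nat 1%nat) * E 1%nat k + (C 1%nat 3%nat 2%nat + C 3%nat 1%nat 2%nat) * E 2%nat k
      + (C 1%nat 3%nat 3%nat + C 3%nat 1%nat 3%nat) * E 3%nat k))).
    { unfold D, det3, colrep, Em; simpl. ring. }
    rewrite (colrep_ext _ _ _ (fun _ => 0) X) in Y.
    assert (Z : det3 (colrep Em 2%nat (fun _ => 0)) = 0) by (unfold det3, colrep; simpl; ring).
    rewrite Z in Y. 
    assert (C 1%nat 3%nat 3%nat + C 3%nat 1%nat 3%nat = 0).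
    { apply (Rmult_eq_reg_l D); [lra|exact HD]. }
    lra. }
  transitivity ((D * sum3 (fun i => P 1%nat i i) -
     sum3 (fun i => sum3 (fun a => det3 (colrep Em a (fun k => P (S a) k i))) * E 1%nat i)) / D).
  { exact (sumlem D (fun i => P 1%nat i i) (fun i => sum3 (fun a => det3 (colrep Em a (fun k => P (S a) k i)))) (fun i => E 1%nat i) HD). }
  rewrite S1, S2, S3, C111, C133. field. exact HD.
Qed.

Lemma sum3_ext f g : (forall i, (i < 3)%nat -> f i = g i) -> sum3 f = sum3 g.
Proof. intro H. unfold sum3. rewrite !H by lia. reflexivity. Qed.

Theorem lemma1
  (U : pt -> Prop) (g : metric) (v : VF) (e : nat -> VF)
  (C : nat -> nat -> nat -> pt -> R)
  (mu1 mu2 alpha1 alpha2 : pt -> R)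
  (HU : open3 U)
  (Hg : is_metric_on U g)
  (Hv : forall k, (k < 3)%nat -> C1_on U (v k))
  (Hv0 : forall x, U x -> exists k, (k < 3)%nat /\ v k x <> 0)
  (He : forall a k, (1 <= a <= 3)%nat -> (k < 3)%nat -> C1_on U (e a k))
  (He1 : forall k x, U x -> e 1%nat k x = v k x / vnorm g v x)
  (Hon : forall a b x, (1 <= a <= 3)%nat -> (1 <= b <= 3)%nat -> U x ->
     gin g x (atp (e a) x) (atp (e b) x) = if Nat.eqb a b then 1 else 0)
  (Hor : forall x, U x -> 0 < det3 (fun k a => e (S a) k x))
  (HC : forall a b k x, (1 <= a <= 3)%nat -> (1 <= b <= 3)%nat -> (k < 3)%nat -> U x ->
     bracket (e a) (e b) k x =
       C a b 1%nat x * e 1%nat k x + C a b 2%nat x * e 2%nat k x + C a b 3%nat x * e 3%nat k x)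
  (Hmu1 : C1_on U mu1) (Hmu2 : C1_on U mu2)
  (Hmu12 : forall x, U x -> mu1 x <> mu2 x)
  (Hode1 : forall x, U x -> dd (e 1%nat) mu1 x =
     - C 3%nat 1%nat 2%nat x - mu1 x * (C 3%nat 1%nat 3%nat x + C 1%nat 2%nat 2%nat x)
     - mu1 x ^ 2 * C 1%nat 2%nat 3%nat x)
  (Hode2 : forall x, U x -> dd (e 1%nat) mu2 x =
     - C 3%nat 1%nat 2%nat x - mu2 x * (C 3%nat 1%nat 3%nat x + C 1%nat 2%nat 2%nat x)
     - mu2 x ^ 2 * C 1%nat 2%nat 3%nat x)
  (Hal1 : C1_on U alpha1) (Hal2 : C1_on U alpha2)
  (Hal10 : forall x, U x -> alpha1 x <> 0) (Hal20 : forall x, U x -> alpha2 x <> 0)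
  (Hlog1 : forall x, U x ->
     dd (e 1%nat) (fun y => ln (Rabs (alpha1 y / vnorm g v y))) x =
       C 3%nat 1%nat 3%nat x + mu1 x * C 1%nat 2%nat 3%nat x)
  (Hlog2 : forall x, U x ->
     dd (e 1%nat) (fun y => ln (Rabs (alpha2 y / vnorm g v y))) x =
       C 3%nat 1%nat 3%nat x + mu2 x * C 1%nat 2%nat 3%nat x) :
  forall x, U x ->
    divg g (e 1%nat) x =
      dd (e 1%nat)
        (fun y => ln (Rabs (alpha1 y * alpha2 y * (mu2 y - mu1 y) / (vnorm g v y) ^ 2))) x.
Proof.
  intros x Hx.
  destruct Hg as [Hg1 [Hgs Hgp]].
  set (D := fun y => det3 (fun k a => e (S a) k y)).
  assert (HDpos : forall y, U y -> 0 < D y) by (intros; apply Hor; auto).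
  assert (Hsq : forall y, U y -> sqrt (detg g y) = / D y).
  { intros y Hy.
    pose proof (det_gram (fun i j => g i j y) (fun k a => e (S a) k y)) as h1.
    assert (h2 : det3 (fun a b => gin g y (atp (e (S a)) y) (atp (e (S b)) y)) = 1).
    { unfold det3. rewrite !Hon by (auto; lia). simpl. ring. }
    change (det3 (fun a b => gin g y (atp (e (S a)) y) (atp (e (S b)) y)) = detg g y * D y * D y) in h1.
    rewrite h2 in h1. pose proof (HDpos y Hy).
    apply sqrt_lem_1.
    - assert (detg g y = / (D y * D y)) by (field_simplify_eq; [lra | lra]).
      rewrite H0. left. apply Rinv_0_lt_compat. nra.
    - left. apply Rinv_0_lt_compat. lra.
    - field_simplify_eq; [|lra]. nra. }
  assert (LHS : divg g (e 1%nat) x = C 3%nat 1%nat 3%nat x - C 1%nat 2%nat 2%nat x).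
  { assert (PDi : forall i, (i < 3)%nat ->
      pd (fun y => sqrt (detg g y) * e 1%nat i y) i x =
      (pd (e 1%nat i) i x * D x -
       sum3 (fun a => det3 (colrep (fun k b => e (S b) k x) a (fun k => pd (e (S a) k) i x))) * e 1%nat i x)
      / (D x)²).
    { intros i Hi. apply pd_eq.
      apply (hp_loc U _ (fun y => e 1%nat i y / D y) i x _ HU Hx).
      - intros y Hy. rewrite Hsq by exact Hy. pose proof (HDpos y Hy). field. lra.
      - apply hp_div.
        + apply (hp_pd U); auto; apply He; lia.
        + apply (hp_det3 (fun k a => e (S a) k) (fun k a => pd (e (S a) k) i x)).
          intros k a Hk Ha. apply (hp_pd U); auto; apply He; lia.
        + pose proof (HDpos x Hx). lra. }
    unfold divg. rewrite Hsq by exact Hx. rewrite Rinv_inv.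
    rewrite (sum3_ext _ _ PDi).
    apply (alg (fun a k => e a k x) (fun a k i => pd (e a k) i x) (fun a b c => C a b c x)).
    - pose proof (HDpos x Hx). unfold D in H. lra.
    - intros a k Ha Hk. exact (HC 1%nat a k x ltac:(lia) Ha Hk Hx).
    - intros k Hk. exact (HC 3%nat 1%nat k x ltac:(lia) ltac:(lia) Hk Hx). }
  rewrite LHS. clear LHS.
  assert (HN : 0 < vnorm g v x).
  { unfold vnorm. apply sqrt_lt_R0. apply Hgp; [exact Hx | apply Hv0; exact Hx]. }
  assert (HNd : forall i, (i < 3)%nat -> exists l, has_partial (vnorm g v) i x l).
  { intros i Hi. eexists. unfold vnorm.
    apply hp_sqrt.
    - unfold gin, atp, sum3.
      hp_auto ltac:(eapply hp_pd; [ first [apply Hg1 | apply Hv]; lia | exact Hx | exact Hi ]).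
    - apply Hgp; [exact Hx | apply Hv0; exact Hx]. }
  assert (Hm : mu2 x - mu1 x <> 0) by (intro; apply (Hmu12 x Hx); lra).
  pose proof (Hal10 x Hx). pose proof (Hal20 x Hx).
  assert (PI : forall i, (i < 3)%nat ->
    pd (fun y => ln (Rabs (alpha1 y * alpha2 y * (mu2 y - mu1 y) / (vnorm g v y) ^ 2))) i x =
    pd (fun y => ln (Rabs (alpha1 y / vnorm g v y))) i x +
    pd (fun y => ln (Rabs (alpha2 y / vnorm g v y))) i x +
    (pd mu2 i x - pd mu1 i x) / (mu2 x - mu1 x)).
  { intros i Hi. destruct (HNd i Hi) as [dN HdN].
    erewrite (pd_eq (fun y => ln (Rabs (alpha1 y * alpha2 y * (mu2 y - mu1 y) / (vnorm g v y) ^ 2)))).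
    2:{ apply hp_lnabs.
        - apply hp_div.
          + apply hp_mult. apply hp_mult.
            * apply (hp_pd U); auto.
            * apply (hp_pd U); auto.
            * apply hp_minus; apply (hp_pd U); auto.
          + apply hp_sq. exact HdN.
          + apply pow_nonzero. lra.
        - unfold Rdiv. repeat apply Rmult_integral_contrapositive_currified; auto.
          apply Rinv_neq_0_compat. apply pow_nonzero. lra. }
    erewrite (pd_eq (fun y => ln (Rabs (alpha1 y / vnorm g v y)))).
    2:{ apply hp_lnabs.
        - apply hp_div. apply (hp_pd U); auto. exact HdN. lra.
        - unfold Rdiv. apply Rmult_integral_contrapositive_currified; auto.
          apply Rinv_neq_0_compat. lra. }
    erewrite (pd_eq (fun y => ln (Rabs (alpha2 y / vnorm g v y)))).
    2:{ apply hp_lnabs.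
        - apply hp_div. apply (hp_pd U); auto. exact HdN. lra.
        - unfold Rdiv. apply Rmult_integral_contrapositive_currified; auto.
          apply Rinv_neq_0_compat. lra. }
    unfold Rsqr. field. repeat split; auto; lra. }
  symmetry. transitivity (dd (e 1%nat) (fun y => ln (Rabs (alpha1 y / vnorm g v y))) x +
                dd (e 1%nat) (fun y => ln (Rabs (alpha2 y / vnorm g v y))) x +
                (dd (e 1%nat) mu2 x - dd (e 1%nat) mu1 x) / (mu2 x - mu1 x)).
  1:{ unfold dd. rewrite (sum3_ext _ (fun i => e 1%nat i x * (
        pd (fun y => ln (Rabs (alpha1 y / vnorm g v y))) i x +
        pd (fun y => ln (Rabs (alpha2 y / vnorm g v y))) i x +
        (pd mu2 i x - pd mu1 i x) / (mu2 x - mu1 x)))).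
      - unfold sum3. field. exact Hm.
      - intros i Hi. rewrite PI by exact Hi. reflexivity. }
  rewrite Hlog1, Hlog2, Hode1, Hode2 by exact Hx. field. exact Hm.
Qed.
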